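(* Let $G$ be a DAG, let $V^\infty\subseteq V(G)$, and let $T\subseteq V^\infty$. Let $M,Z\subseteq V(G)$ with $Z\cap T=\emptyset$. Suppose $M$ intersects every odd $T$-path in $G$ and $s_G(M)\subseteq Z\subseteq V(G)\setminus M$. Let $(G',V'^\infty):=\mathrm{torso}(G,V^\infty,Z)$. Then every node of $s_{G'}(M)$ has total degree at most one in $G'\setminus M$. Here shadows in $G'$ are taken with respect to the same terminal set $T$.
   Context: Paths are simple directed paths; a path is odd if it has an odd number of edges; a $T$-path has both ends in $T$. $\mathcal{R}_H(X)$ is the set of nodes reachable from $X$ in $H$, including $X$. For a graph $H\supseteq T$ and $M\subseteq V(H)$, the shadows are: - $f_H(M):=V(H\setminus M)\setminus\mathcal{R}_{H\setminus M}(T)$; - $r_H(M)$ is the set of nodes $v\in V(H)\setminus M$ with no path to $T$ in $H\setminus M$; - $s_H(M):=f_H(M)\cup r_H(M)$. Parity-preserving torso. Given a DAG $G$ and $Z,V^\infty\subseteq V(G)$, first form $G_0$ from $G\setminus Z$ by adding an edge $u\rightarrow v$ for every pair of distinct $u,v\in V(G)\setminus Z$ such that $G$ has an odd $u\rightarrow v$ path with all internal nodes in $Z$. Then, for every pair of distinct $u,v\in V(G)\setminus Z$ such that $G$ has an even $u\rightarrow v$ path with all internal nodes in $Z$, add a new node $x_{uv}$ and edges $u\rightarrow x_{uv}$, $x_{uv}\rightarrow v$. The result is $G'$. Set $V'^\infty:=(V^\infty\setminus Z)\cup\{\text{new nodes}\}$, and $\mathrm{torso}(G,V^\infty,Z):=(G',V'^\infty)$.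 *)

(* Defs.v *)
From mathcomp Require Import all_boot.
Set Implicit Arguments. Unset Strict Implicit. Unset Printing Implicit Defensive.

Fixpoint walk (U : Type) (E : U -> U -> Prop) (x : U) (p : seq U) : Prop :=
  match p with
  | [::] => True
  | y :: q => E x y /\ walk E y q
  end.

(* a (simple, directed) path in the graph (S, E): nonempty, all nodes in S,
   consecutive nodes joined by edges, no repeated node.
   Its number of edges is (size p).-1. *)
Definition is_path (U : eqType) (S : U -> Prop) (E : U -> U -> Prop) (p : seq U) : Prop :=
  match p with
  | [::] => False
  | x :: q => [/\ walk E x q, uniq p & forall v, v \in p -> S v]
  end.

Definition del (U : Type) (S : U -> Prop) (M : U -> Prop) : U -> Prop :=
  fun v => S v /\ ~ M v.

Definition connects (U : eqType) (S : U -> Prop) (E : U -> U -> Prop) (a b : U) : Prop :=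
  exists q, is_path S E (a :: q) /\ last a q = b.

Definition reach (U : eqType) (S : U -> Prop) (E : U -> U -> Prop) (X : U -> Prop) (v : U) : Prop :=
  exists x, X x /\ connects S E x v.

Definition fshadow (U : eqType) (S : U -> Prop) (E : U -> U -> Prop) (T M : U -> Prop) (v : U) : Prop :=
  del S M v /\ ~ reach (del S M) E T v.

Definition rshadow (U : eqType) (S : U -> Prop) (E : U -> U -> Prop) (T M : U -> Prop) (v : U) : Prop :=
  del S M v /\ ~ (exists t, T t /\ connects (del S M) E v t).

Definition shadow (U : eqType) (S : U -> Prop) (E : U -> U -> Prop) (T M : U -> Prop) (v : U) : Prop :=
  fshadow S E T M v \/ rshadow S E T M v.

Definition acyclic (U : Type) (E : U -> U -> Prop) : Prop :=
  forall x q, q <> [::] -> walk E x q -> last x q = x -> False.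

Section Torso.
Variables (V : finType) (e : rel V).

(* G has a u -> v path u :: r ++ [v] whose internal nodes r all lie in Z,
   and its number of edges (size r).+1 has parity b (true = odd) *)
Definition Zpath (Z : {set V}) (u v : V) (b : bool) : Prop :=
  exists r, [/\ is_path (fun _ => True) (fun x y => e x y) (u :: rcons r v),
               (forall w, w \in r -> w \in Z) & odd (size r).+1 = b].

(* vertices of G': inl v for v in V(G)\Z, and inr (u,v) for the new node x_uv *)
Definition torsoV : finType := (V + (V * V))%type.

Definition torso_S (Z : {set V}) (x : torsoV) : Prop :=
  match x with
  | inl v => v \notin Z
  | inr (u, v) => [/\ u != v, u \notin Z, v \notin Z & Zpath Z u v false]
  end.

Definition torso_E (Z : {set V}) (x y : torsoV) : Prop :=
  match x, y with
  | inl u, inl v => [/\ u != v, u \notin Z, v \notin Z & Zpath Z u v true]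
  | inl u, inr (a, b) => u = a /\ torso_S Z (inr (a, b))
  | inr (a, b), inl v => v = b /\ torso_S Z (inr (a, b))
  | inr _, inr _ => False
  end.

Definition torso_inf (Vinf Z : {set V}) (x : torsoV) : Prop :=
  match x with
  | inl v => v \in Vinf /\ v \notin Z
  | inr _ => torso_S Z x
  end.

Definition lift_set (A : {set V}) (x : torsoV) : Prop :=
  match x with
  | inl v => v \in A
  | inr _ => False
  end.
End Torso.

(* Main.v *)
From Stdlib Require Import Classical.
Require Import Defs.
From mathcomp Require Import all_boot.
Set Implicit Arguments. Unset Strict Implicit. Unset Printing Implicit Defensive.

Lemma walk_cat (U : Type) (E : U -> U -> Prop) x p1 p2 :
  walk E x (p1 ++ p2) <-> walk E x p1 /\ walk E (last x p1) p2.
Proof.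
elim: p1 x => [|y p IH] x /=; first by tauto.
split.
- by case=> h1 /IH [h2 h3].
- by case=> [[h1 h2] h3]; split => //; apply/IH.
Qed.

Lemma path_suffix (U : eqType) (S : U -> Prop) (E : U -> U -> Prop) x p z :
  walk E x p -> uniq (x :: p) -> (forall v, v \in x :: p -> S v) -> z \in x :: p ->
  exists r, [/\ walk E z r, uniq (z :: r), (forall v, v \in z :: r -> S v) &
             last z r = last x p].
Proof.
elim: p x => [|y q IH] x.
  move=> _ _ hS; rewrite inE => /eqP ->; by exists [::].
move=> /= [hxy hw] /andP [hx hu] hS.
rewrite inE; case/orP => [/eqP ->|hz].
  exists (y :: q); split => //=; by rewrite hx.
apply: IH => // v hv; apply: hS; by rewrite inE hv orbT.
Qed.

Lemma walk_connects (U : eqType) (S : U -> Prop) (E : U -> U -> Prop) x p :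
  walk E x p -> (forall v, v \in x :: p -> S v) -> connects S E x (last x p).
Proof.
elim: p x => [|y q IH] x.
  move=> _ hS; exists [::]; split => //; split => //.
move=> /= [hxy hw] hS.
have [r [[hwr hur hSr] hl]] : connects S E y (last y q).
  apply: IH => // v hv; apply: hS; by rewrite inE hv orbT.
case hx: (x \in y :: r).
  have [r' [h1 h2 h3 h4]] := path_suffix hwr hur hSr hx.
  exists r'; split; first by split.
  by rewrite h4.
exists (y :: r); split => //; split => //=.
- by rewrite hx.
- move=> v; rewrite inE; case/orP => [/eqP ->|hv]; first by apply: hS; rewrite inE eqxx.
  exact: hSr.
Qed.

Section Conv.
Variables (V : finType) (e : rel V) (Z M : {set V}).

Lemma conv q : forall (t : V) r, t \notin Z -> (forall w, w \in r -> w \in Z) ->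
  is_path (fun _ => True) (fun a b => e a b) (t :: r ++ q) ->
  (forall w, w \in t :: r ++ q -> w \notin M) ->
  last t (r ++ q) \notin Z ->
  exists p, [/\ walk (torso_E e Z) (inl t) p,
     (forall x, x \in inl t :: p -> del (torso_S e Z) (lift_set M) x) &
     last (inl t) p = inl (last t (r ++ q))].
Proof.
elim: q => [|y q IH] t r tZ rZ hp hM hl.
  rewrite cats0 in hl *.
  case/lastP: r rZ hl hM {hp} => [|r' y] rZ hl hM.
    exists [::]; split => //= x; rewrite inE => /eqP ->; split => //=.
    by apply/negP; apply: hM; rewrite inE eqxx.
  by rewrite last_rcons rZ // mem_rcons inE eqxx in hl.
case yZ: (y \in Z).
  have := IH t (rcons r y) tZ.
  rewrite cat_rcons; apply => //.
  by move=> w; rewrite mem_rcons inE; case/orP => [/eqP ->|] //; apply: rZ.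
case: hp => hw hu _.
move: (hw) => /walk_cat [hwr [hey hwq]].
have hu' : uniq ((t :: r) ++ (y :: q)) by [].
move: (hu'); rewrite cat_uniq => /and3P [hu1 _ hu2].
have hty : t != y.
  apply/negP => /eqP ety; move: hu'; rewrite ety /= mem_cat inE eqxx orbT; done.
have hz : Zpath e Z t y (odd (size r).+1).
  exists r; split => //; split => //.
  - by rewrite -cats1; apply/walk_cat; split => //=; split.
  - by move: hu; rewrite -cat_rcons -cat_cons cat_uniq => /andP [] .
have [p [hwp hSp hlp]] : exists p, [/\ walk (torso_E e Z) (inl y) p,
     (forall x, x \in inl y :: p -> del (torso_S e Z) (lift_set M) x) &
     last (inl y) p = inl (last y ([::] ++ q))].
  apply: (IH y [::]).
  - by rewrite yZ.
  - by [].
  - by split.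
  - move=> w /= hw'; apply: hM; by rewrite inE mem_cat hw' !orbT.
  - by move: hl; rewrite last_cat.
have dt : del (torso_S e Z) (lift_set M) (inl t).
  split => //=; apply/negP; apply: hM; by rewrite inE eqxx.
case hb: (odd (size r).+1) in hz.
  exists (inl y :: p); split => //=.
  - split => //; split => //; by rewrite yZ.
  - move=> x; rewrite inE; case/orP => [/eqP -> //|]; exact: hSp.
  - by rewrite hlp /= last_cat.
have tS : torso_S e Z (inr (t, y)) by split => //; rewrite yZ.
exists (inr (t, y) :: inl y :: p); split => //=.
- move=> x; rewrite inE; case/orP => [/eqP -> //|]; rewrite inE; case/orP => [/eqP ->|hx].
  + by split.
  + by apply: hSp.
- by rewrite hlp /= last_cat.
Qed.
End Conv.

Theorem lemma2p5 (V : finType) (e : rel V) (Vinf T M Z : {set V}) :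
  acyclic (fun x y => e x y) ->
  T \subset Vinf ->
  [disjoint Z & T] ->
  (* M intersects every odd T-path of G *)
  (forall x q, is_path (fun _ => True) (fun a b => e a b) (x :: q) ->
     odd (size q) -> x \in T -> last x q \in T -> has (mem M) (x :: q)) ->
  (* s_G(M) \subseteq Z \subseteq V(G) \ M *)
  (forall v, shadow (fun _ => True) (fun a b => e a b) (fun v => v \in T) (fun v => v \in M) v -> v \in Z) ->
  [disjoint Z & M] ->
  (* every node w of s_{G'}(M) has total degree <= 1 in G' \ M:
     any two edges of G' \ M incident with w coincide *)
  forall w : torsoV V,
    shadow (torso_S e Z) (torso_E e Z) (lift_set T) (lift_set M) w ->
    forall a b c d : torsoV V,
      torso_E e Z a b -> del (torso_S e Z) (lift_set M) a -> del (torso_S e Z) (lift_set M) b ->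
      (a = w \/ b = w) ->
      torso_E e Z c d -> del (torso_S e Z) (lift_set M) c -> del (torso_S e Z) (lift_set M) d ->
      (c = w \/ d = w) ->
      (a, b) = (c, d).
Proof.
move=> _ _ HZT _ Hsh _ w Hw.
have tnZ : forall t, t \in T -> t \notin Z.
  by move=> t tT; apply/negP => tz; move: (disjointFr HZT tz); rewrite tT.
have fromG : forall x, x \notin Z -> x \notin M ->
  (exists t, t \in T /\ exists p, [/\ walk (torso_E e Z) (inl t) p,
     (forall y, y \in inl t :: p -> del (torso_S e Z) (lift_set M) y) &
     last (inl t) p = inl x]) /\
  (exists t, t \in T /\ exists p, [/\ walk (torso_E e Z) (inl x) p,
     (forall y, y \in inl x :: p -> del (torso_S e Z) (lift_set M) y) &
     last (inl x) p = inl t]).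
  move=> x xZ xM.
  have nsh : ~ shadow (fun _ => True) (fun a b => e a b) (fun v => v \in T) (fun v => v \in M) x.
    by move/Hsh; rewrite (negbTE xZ).
  have dx : del (fun _ => True) (fun v => v \in M) x by split => //; apply/negP.
  split.
  - have [t [tT [q [[hw hu hS] hl]]]] : reach (del (fun _ => True) (fun v => v \in M)) (fun a b => e a b) (fun v => v \in T) x.
      by apply: NNPP => nr; apply: nsh; left.
    exists t; split => //.
    have hl' : last t ([::] ++ q) \notin Z by rewrite /= hl.
    have [p [h1 h2 h3]] := @conv V e Z M q t [::] (tnZ t tT) (fun _ (h : _ \in [::]) => match notF h with end)
      (And3 hw hu (fun _ _ => I)) (fun w hw => introN idP (proj2 (hS w hw))) hl'.
    by exists p; split => //; rewrite h3 /= hl.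
  - have [t [tT [q [[hw hu hS] hl]]]] : exists t, t \in T /\ connects (del (fun _ => True) (fun v => v \in M)) (fun a b => e a b) x t.
      by apply: NNPP => nr; apply: nsh; right.
    exists t; split => //.
    have hl' : last x ([::] ++ q) \notin Z by rewrite /= hl tnZ.
    have [p [h1 h2 h3]] := @conv V e Z M q x [::] xZ (fun _ (h : _ \in [::]) => match notF h with end)
      (And3 hw hu (fun _ _ => I)) (fun w hw => introN idP (proj2 (hS w hw))) hl'.
    by exists p; split => //; rewrite h3 /= hl.
have Hd : del (torso_S e Z) (lift_set M) w by case: Hw => [][].
case: w Hw Hd => [x|[u v]] Hw Hd.
  exfalso; case: Hd => /= xZ xM.
  have [[t [tT [p [h1 h2 h3]]]] [t' [tT' [p' [h1' h2' h3']]]]] := fromG x xZ (introN idP xM).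
  case: Hw => [][_ Hn]; apply: Hn.
  - exists (inl t); split => //; rewrite -h3; exact: walk_connects.
  - exists (inl t'); split => //; rewrite -h3'; exact: walk_connects.
have key : forall b' c', torso_E e Z (inr (u, v)) b' -> del (torso_S e Z) (lift_set M) b' ->
    torso_E e Z c' (inr (u, v)) -> del (torso_S e Z) (lift_set M) c' -> False.
  move=> b' c'; case: b' => [y|[]] //= [-> hS] [/= vZ vM].
  case: c' => [y'|[]] //= [-> _] [/= uZ uM].
  have [[t [tT [p [h1 h2 h3]]]] _] := fromG u uZ (introN idP uM).
  have [_ [t' [tT' [p' [h1' h2' h3']]]]] := fromG v vZ (introN idP vM).
  case: Hw => [][_ Hn]; apply: Hn.
  - exists (inl t); split => //.
    have -> : inr (u, v) = last (inl t) (rcons p (inr (u, v))) by rewrite last_rcons.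
    apply: walk_connects.
      rewrite -cats1; apply/walk_cat; rewrite h3; split => //.
    move=> z; rewrite -cats1 -cat_cons mem_cat; case/orP => [|]; first exact: h2.
    by rewrite inE => /eqP ->; split.
  - exists (inl t'); split => //.
    rewrite -h3'.
    have -> : last (inl v) p' = last (inr (u, v)) (inl v :: p') by [].
    apply: walk_connects => //= z; rewrite in_cons; case/orP => [/eqP -> |]; first by split.
    exact: h2'.
move=> a b c d Hab Ha Hb Hw1 Hcd Hc Hd' Hw2.
case: Hw1 => ?; case: Hw2 => ?; subst.
- case: b Hb Hab => [y|[]] //= _ [-> _]; case: d Hd' Hcd => [y'|[]] //= _ [-> _] //.
- by case: (key _ _ Hab Hb Hcd Hc).
- by case: (key _ _ Hcd Hd' Hab Ha).
- case: a Ha Hab => [y|[]] //= _ [-> _]; case: c Hc Hcd => [y'|[]] //= _ [-> _] //.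
Qed.
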